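(* Let $\mathcal H$ be a complex separable Hilbert space, let $\mathcal A=(A_n)_{n\ge0}$ be a sequence of positive invertible bounded operators on $\mathcal H$ with $\sup_n\|A_n\|<\infty$, and suppose the operator-valued weighted shift $W_{\mathcal A}$ on $\ell^2(\mathcal H)$ is quadratically hyponormal. If $A_n=A_{n+1}=A_{n+2}$ for some $n\ge0$, then $A_k=A_n$ for every $k\ge1$.
   Context: $\ell^2(\mathcal H)=\{(x_n)_{n\ge0}: x_n\in\mathcal H,\ \sum_n\|x_n\|^2<\infty\}$; the operator-valued weighted shift is $W_{\mathcal A}(x_0,x_1,\dots)=(0,A_0x_0,A_1x_1,\dots)$. A bounded operator $T$ is hyponormal if $T^*T-TT^*\ge0$, and quadratically hyponormal if $T+\lambda T^2$ is hyponormal for every $\lambda\in\mathbb C$. *)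

(* Defs.v *)
From HB Require Import structures.
From mathcomp Require Import all_boot all_order all_algebra.
From mathcomp Require Import reals.
From mathcomp Require Import complex.
From Stdlib Require Import ClassicalEpsilon.
Set Implicit Arguments. Unset Strict Implicit. Unset Printing Implicit Defensive.
Import GRing.Theory Num.Theory.
Local Open Scope ring_scope.
Local Open Scope complex_scope.

Record chilbert (R : realType) := CHilbert {
  hs_car :> lmodType R[i];
  hs_inner : hs_car -> hs_car -> R[i];
  hs_linl : forall (a : R[i]) (x y z : hs_car),
      hs_inner (a *: x + y) z = a * hs_inner x z + hs_inner y z;
  hs_conj : forall x y : hs_car, hs_inner y x = (hs_inner x y)^*;
  hs_pos : forall x : hs_car, 0 <= hs_inner x x;
  hs_def : forall x : hs_car, hs_inner x x = 0 -> x = 0;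
  hs_complete : forall u : nat -> hs_car,
      (forall e : R, 0 < e -> exists N : nat, forall m n : nat, (N <= m)%N -> (N <= n)%N ->
          Num.sqrt (complex.Re (hs_inner (u m - u n) (u m - u n))) < e) ->
      exists l : hs_car, forall e : R, 0 < e -> exists N : nat, forall n : nat, (N <= n)%N ->
          Num.sqrt (complex.Re (hs_inner (u n - l) (u n - l))) < e;
  hs_separable : exists d : nat -> hs_car, forall (x : hs_car) (e : R), 0 < e ->
      exists n : nat, Num.sqrt (complex.Re (hs_inner (x - d n) (x - d n))) < e
}.

Section Defs.
Variables (R : realType) (H : chilbert R).

Definition hnorm (x : H) : R := Num.sqrt (complex.Re (hs_inner x x)).

Definition hlinear (T : H -> H) : Prop :=
  forall (a : R[i]) (x y : H), T (a *: x + y) = a *: T x + T y.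
Definition hbounded (T : H -> H) : Prop :=
  exists M : R, forall x : H, hnorm (T x) <= M * hnorm x.
Definition bounded_op (T : H -> H) : Prop := hlinear T /\ hbounded T.
(* positive operator: <T x, x> >= 0 for all x (order of C: real and >= 0) *)
Definition hpositive (T : H -> H) : Prop := forall x : H, 0 <= hs_inner (T x) x.
Definition hinvertible (T : H -> H) : Prop :=
  exists B : H -> H, bounded_op B /\ (forall x, T (B x) = x) /\ (forall x, B (T x) = x).

Definition l2 (x : nat -> H) : Prop :=
  exists M : R, forall N : nat, \sum_(k < N) hnorm (x k) ^+ 2 <= M.

Definition cseries_to (u : nat -> R[i]) (l : R[i]) : Prop :=
  forall e : R, 0 < e -> exists N : nat, forall n : nat, (N <= n)%N ->
    `|\sum_(k < n) u k - l| < e%:C.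
Definition cseries_sum (u : nat -> R[i]) : R[i] :=
  epsilon (inhabits 0) (fun l => cseries_to u l).

Definition l2inner (x y : nat -> H) : R[i] :=
  cseries_sum (fun n => hs_inner (x n) (y n)).

Definition l2_adjoint (S T : (nat -> H) -> (nat -> H)) : Prop :=
  (forall x, l2 x -> l2 (S x)) /\
  (forall x y, l2 x -> l2 y -> l2inner (T x) y = l2inner x (S y)).

Definition hyponormal (T : (nat -> H) -> (nat -> H)) : Prop :=
  forall S, l2_adjoint S T ->
    forall x, l2 x -> 0 <= l2inner (fun n => S (T x) n - T (S x) n) x.

Definition quad_hyponormal (T : (nat -> H) -> (nat -> H)) : Prop :=
  forall lam : R[i], hyponormal (fun x n => T x n + lam *: T (T x) n).

Definition wshift (A : nat -> H -> H) (x : nat -> H) : nat -> H :=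
  fun n => match n with 0%N => 0 | k.+1 => A k (x k) end.

End Defs.

(* Main.v *)
Require Import Defs.
From mathcomp Require Import all_boot all_order all_algebra.
From mathcomp Require Import classical_sets reals complex.
From mathcomp Require Import ring lra zify.
From Stdlib Require Import ClassicalEpsilon FunctionalExtensionality PropExtensionality.
Import Order.TTheory GRing.Theory Num.Theory.
Set Implicit Arguments. Unset Strict Implicit. Unset Printing Implicit Defensive.
Local Open Scope ring_scope.
Local Open Scope complex_scope.

Section Basics.
Variables (R : realType) (H : chilbert R).
Implicit Types (x y z : H) (a b : R[i]).
Local Notation ip := (@hs_inner R H).
Local Notation Rc := (@complex.Re R).
Local Notation Ic := (@complex.Im R).

Definition nn (x : H) : R := Rc (ip x x).

Lemma ip0l z : ip 0 z = 0.
Proof.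
have := hs_linl 1 (0:H) 0 z. rewrite scale1r addr0 mul1r => h.
by apply: (addrI (ip 0 z)); rewrite addr0 -h.
Qed.

Lemma ipDl x y z : ip (x + y) z = ip x z + ip y z.
Proof. by have := hs_linl 1 x y z; rewrite scale1r mul1r. Qed.

Lemma ipZl a x z : ip (a *: x) z = a * ip x z.
Proof. by have := hs_linl a x 0 z; rewrite addr0 ip0l addr0. Qed.

Lemma ipNl x z : ip (- x) z = - ip x z.
Proof. by rewrite -scaleN1r ipZl mulN1r. Qed.

Lemma ipBl x y z : ip (x - y) z = ip x z - ip y z.
Proof. by rewrite ipDl ipNl. Qed.

Lemma ipDr x y z : ip z (x + y) = ip z x + ip z y.
Proof. by rewrite hs_conj ipDl rmorphD /= -!hs_conj. Qed.

Lemma ipZr a x z : ip z (a *: x) = a^* * ip z x.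
Proof. by rewrite hs_conj ipZl rmorphM /= -hs_conj. Qed.

Lemma ip0r z : ip z 0 = 0.
Proof. by rewrite hs_conj ip0l conjc0. Qed.

Lemma ipNr x z : ip z (- x) = - ip z x.
Proof. by rewrite -scaleN1r ipZr rmorphN1 mulN1r. Qed.

Lemma ipBr x y z : ip z (x - y) = ip z x - ip z y.
Proof. by rewrite ipDr ipNr. Qed.

Lemma Rc_conj a : Rc (a^*) = Rc a.
Proof. by case: a. Qed.

Lemma Re_ipC x y : Rc (ip x y) = Rc (ip y x).
Proof. by rewrite [ip y x]hs_conj Rc_conj. Qed.

Lemma nn_ge0 x : 0 <= nn x.
Proof. by have := hs_pos x; rewrite lecE => /andP[_]. Qed.

Lemma ip_self x : ip x x = (nn x)%:C.
Proof.
have := hs_pos x => /ger0_Im. rewrite /nn. by case: (ip x x) => a b /= ->.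
Qed.

Lemma nn_eq0 x : nn x = 0 -> x = 0.
Proof. by move=> h; apply: hs_def; rewrite ip_self h. Qed.

Lemma nnD x y : nn (x + y) = nn x + 2 * Rc (ip x y) + nn y.
Proof.
rewrite /nn ipDl !ipDr !raddfD /= (Re_ipC y x). ring.
Qed.

Lemma nnN x : nn (- x) = nn x.
Proof. by rewrite /nn ipNl ipNr opprK. Qed.

Lemma nnB x y : nn (x - y) = nn x - 2 * Rc (ip x y) + nn y.
Proof. by rewrite nnD nnN ipNr raddfN /=; ring. Qed.

Lemma nnZ a x : nn (a *: x) = (Rc a ^+ 2 + Ic a ^+ 2) * nn x.
Proof.
rewrite /nn ipZl ipZr ip_self. case: a => a1 a2 /=. simpc. ring.
Qed.

Lemma nnZr (r : R) x : nn (r%:C *: x) = r ^+ 2 * nn x.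
Proof. by rewrite nnZ /= expr0n /= addr0. Qed.

Lemma hnorm_sq x : hnorm x ^+ 2 = nn x.
Proof. by rewrite /hnorm sqr_sqrtr // nn_ge0. Qed.

End Basics.

Section Ops.
Variables (R : realType) (H : chilbert R).
Implicit Types (x y z : H) (a b : R[i]).
Local Notation ip := (@hs_inner R H).
Local Notation Rc := (@complex.Re R).
Local Notation Ic := (@complex.Im R).

Section Lin.
Variable T : H -> H.
Hypothesis hl : hlinear T.

Lemma lin0 : T 0 = 0.
Proof.
have := hl 1 0 0. rewrite scale1r addr0 scale1r => h.
by apply: (addrI (T 0)); rewrite addr0 -h.
Qed.

Lemma linD x y : T (x + y) = T x + T y.
Proof. by have := hl 1 x y; rewrite !scale1r. Qed.

Lemma linZ a x : T (a *: x) = a *: T x.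
Proof. by have := hl a x 0; rewrite !addr0 lin0 addr0. Qed.

Lemma linN x : T (- x) = - T x.
Proof. by rewrite -scaleN1r linZ scaleN1r. Qed.

Lemma linB x y : T (x - y) = T x - T y.
Proof. by rewrite linD linN. Qed.

Lemma conj_i : 'i^* = - 'i :> R[i].
Proof. by apply/eqP; rewrite eq_complex /= oppr0 !eqxx. Qed.

Lemma ge0_conj a : 0 <= a -> a^* = a.
Proof. by move=> /ger0_Im; case: a => a1 a2 /= ->; rewrite oppr0. Qed.

Hypothesis hp : hpositive T.

Lemma selfadj x y : ip (T x) y = ip x (T y).
Proof.
have d v : ip (T v) v = ip v (T v) by rewrite [ip v _]hs_conj ge0_conj.
have [i0 hi0] : exists i0 : R[i], i0 = 'i by exists 'i.
have e1 := d (x + y). have e2 := d (x + i0 *: y).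
rewrite ?linD ?linZ ?ipDl ?ipDr ?ipZl ?ipZr in e1 e2.
move: e1 e2; rewrite (d x) (d y).
have hj : i0^* - i0 != 0 :> R[i].
  rewrite hi0 eq_complex /= negb_and; apply/orP; right; apply/eqP; lra.
move: hj.
generalize (ip (T x) y) (ip x (T y)) (ip (T y) x) (ip y (T x)) (ip x (T x)) (ip y (T y)).
move=> a b c e f g hj e1 e2.
have h : (i0^* - i0) * (a - b) = 0.
  have -> : (i0^* - i0) * (a - b) = ((f + i0^* * a + (i0 * c + i0 * (i0^* * g))) - (f + i0^* * b + (i0 * e + i0 * (i0^* * g))))
     - i0 * ((f + a + (c + g)) - (f + b + (e + g))).
    by ring.
  by rewrite e1 e2 !subrr mulr0 subr0.
by move/eqP: h; rewrite mulf_eq0 (negbTE hj) /= subr_eq0 => /eqP.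
Qed.

End Lin.
End Ops.

Section Sq.
Variables (R : realType) (H : chilbert R).
Implicit Types (x y z : H) (a b : R[i]).
Local Notation ip := (@hs_inner R H).
Local Notation Rc := (@complex.Re R).
Local Notation Ic := (@complex.Im R).

Lemma Rc_realM (r : R) a : Rc (r%:C * a) = r * Rc a.
Proof. by case: a => a1 a2; simpc. Qed.

Lemma conjR (r : R) : Num.conj (r%:C : R[i]) = r%:C.
Proof. by apply/eqP; rewrite eq_complex /= oppr0 !eqxx. Qed.

Lemma posRe T : hpositive T -> forall x, 0 <= Rc (ip (T x) x).
Proof. by move=> hp x; have := hp x; rewrite lecE => /andP[_]. Qed.

Lemma Re_ip_le x y : 2 * Rc (ip x y) <= nn x + nn y.
Proof. have := nn_ge0 (x - y); rewrite nnB; lra. Qed.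

Lemma Re_ip_ge x y : - (nn x + nn y) <= 2 * Rc (ip x y).
Proof. have := nn_ge0 (x + y); rewrite nnD; lra. Qed.

Lemma nnB_le x y : nn (x - y) <= 2 * nn x + 2 * nn y.
Proof. rewrite nnB; have := Re_ip_ge x y; lra. Qed.

Lemma nnD_le x y : nn (x + y) <= 2 * nn x + 2 * nn y.
Proof. rewrite nnD; have := Re_ip_le x y; lra. Qed.

Section CS.
Variable C : H -> H.
Hypotheses (hl : hlinear C) (hp : hpositive C).
Variable K : R.
Hypothesis hK : forall x, nn (C x) <= K * nn x.

Lemma quad_exp u v (r : R) :
  Rc (ip (C (u - r%:C *: v)) (u - r%:C *: v)) =
  Rc (ip (C u) u) - 2 * r * Rc (ip (C u) v) + r ^+ 2 * Rc (ip (C v) v).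
Proof.
rewrite (linB hl) (linZ hl) !ipBl !ipBr !ipZl !ipZr.
rewrite (selfadj hl hp v u) [ip v (C u)]hs_conj.
move: (ip (C u) u) (ip (C u) v) (ip (C v) v) => [a1 a2] [b1 b2] [d1 d2].
simpc => /=; ring.
Qed.

Lemma CS_pos u : nn (C u) <= ((`|K| + 1) / 2) * Rc (ip (C u) u).
Proof.
set K1 := (`|K| + 1) / 2.
have K1pos : 0 < K1 by rewrite /K1; have := normr_ge0 K; lra.
set al := Rc (ip (C u) u). set be := nn (C u). set ga := Rc (ip (C (C u)) (C u)).
have hga : ga <= K1 * be.
  have h1 := Re_ip_le (C (C u)) (C u).
  have h2 := hK (C u). have h3 : K <= `|K| := ler_norm K.
  have h4 := nn_ge0 (C u).
  rewrite /ga /K1 /be; nra.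
have hq := posRe hp (u - (K1^-1)%:C *: C u).
rewrite quad_exp -/al in hq.
have e : Rc (ip (C u) (C u)) = be by [].
rewrite e -/ga in hq.
have hi : K1^-1 * K1 = 1 by rewrite mulVf // lt0r_neq0.
have hip : 0 < K1^-1 by rewrite invr_gt0.
have : ga * K1^-1 <= be by rewrite ler_pdivrMr //; nra.
have hbe : 0 <= be := nn_ge0 _.
nra.
Qed.

End CS.
End Sq.

Section Geom.
Variable R : realType.

Lemma bernoulli_ineq (h : R) k : 0 <= h -> 1 + k%:R * h <= (1 + h) ^+ k.
Proof.
move=> h0; elim: k => [|k IH]; first by rewrite expr0 mul0r addr0.
rewrite exprS -natr1.
have hk : 0 <= k%:R * h :> R by rewrite mulr_ge0.
have : (1 + h) * (1 + k%:R * h) <= (1 + h) * (1 + h) ^+ k by rewrite ler_pM2l //; lra.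
nra.
Qed.

Lemma geom0 (c T a b : R) : 0 < c -> 0 < T -> 0 <= a ->
  (forall k, (c + T) ^+ k * a <= b * T ^+ k) -> a = 0.
Proof.
move=> c0 T0 a0 hk.
case: (eqVneq a 0) => // /eqP an0; exfalso.
have apos : 0 < a by rewrite lt_neqAle eq_sym; apply/andP; split => //; apply/eqP.
set h := c / T.
have h0 : 0 < h by rewrite divr_gt0.
set k := Num.bound `|b / (a * h)|.
have bnd : `|b / (a * h)| < k%:R.
  by apply: archi_boundP; apply: normr_ge0.
have := hk k.
have eT : c + T = T * (1 + h) by rewrite /h; field; apply: lt0r_neq0.
rewrite eT exprMn.
have := bernoulli_ineq k (ltW h0).
have Tk : 0 < T ^+ k by rewrite exprn_gt0.
move=> hb hle.
have h1 : T ^+ k * ((1 + k%:R * h) * a) <= T ^+ k * ((1 + h) ^+ k * a).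
  by rewrite ler_pM2l // ler_pM2r.
have : T ^+ k * ((1 + k%:R * h) * a) <= T ^+ k * b.
  apply: (le_trans h1). by move: hle; rewrite mulrA (mulrC b).
rewrite ler_pM2l // => hfin.
have hh : b / (a * h) * (a * h) = b by rewrite divfK // mulf_neq0 // lt0r_neq0.
have ler := ler_norm (b / (a * h)).
have ah : 0 < a * h by rewrite mulr_gt0.
nra.
Qed.

End Geom.

Lemma zmodAC (V : zmodType) (a b c d : V) : a - b + (c - d) = c - b - (d - a).
Proof. by rewrite opprB [LHS]addrACA [RHS]addrACA (addrC a). Qed.

Section SqU.
Variables (R : realType) (H : chilbert R).
Local Notation ip := (@hs_inner R H).
Local Notation Rc := (@complex.Re R).
Variables B C : H -> H.
Hypotheses (hlB : hlinear B) (hlC : hlinear C) (hpB : hpositive B) (hpC : hpositive C).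
Variables KB KC c : R.
Hypotheses (hKB : forall x, nn (B x) <= KB * nn x) (hKC : forall x, nn (C x) <= KC * nn x).
Hypotheses (c0 : 0 < c) (hcB : forall x, c * nn x <= nn (B x)).
Hypothesis hsq : forall x, B (B x) = C (C x).

Lemma sqrt_uniq x : B x = C x.
Proof.
set K1 := (`|KC| + 1) / 2.
have K1pos : 0 < K1 by rewrite /K1; have := normr_ge0 KC; lra.
set t := K1 / 2 + 1.
have t0 : 0 < t by rewrite /t; lra.
pose X w := B w - C w.
have key u : B (X u) + t%:C *: X u = X (t%:C *: u - C u).
  rewrite /X ?(linB hlB) ?(linB hlC) ?(linZ hlB) ?(linZ hlC) hsq scalerBr.
  by rewrite zmodAC.
have low v : (c + t ^+ 2) * nn v <= nn (B v + t%:C *: v).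
  rewrite nnD nnZr ipZr conjR Rc_realM.
  have := hcB v. have := posRe hpB v. have := nn_ge0 v. nra.
have upp u : nn (t%:C *: u - C u) <= t ^+ 2 * nn u.
  rewrite nnB nnZr ipZl Rc_realM Re_ipC.
  have := CS_pos hlC hpC hKC u. rewrite -/K1.
  have tK : K1 <= 2 * t by rewrite /t; lra.
  have := posRe hpC u. nra.
have KXb w : nn (X w) <= (2 * `|KB| + 2 * `|KC|) * nn w.
  have := nnB_le (B w) (C w). have := hKB w. have := hKC w.
  have := ler_norm KB. have := ler_norm KC. have := nn_ge0 w. rewrite /X. nra.
pose f w := t%:C *: w - C w.
have P1 k : nn (iter k f x) <= (t ^+ 2) ^+ k * nn x.
  elim: k => [|k IH]; first by rewrite expr0 mul1r.
  rewrite iterS exprS -mulrA. apply: (le_trans (upp _)).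
  by rewrite ler_pM2l // exprn_gt0.
have P2 k : (c + t ^+ 2) ^+ k * nn (X x) <= nn (X (iter k f x)).
  elim: k => [|k IH]; first by rewrite expr0 mul1r.
  rewrite iterS exprS -mulrA -key. apply: le_trans (low _).
  rewrite ler_pM2l; [exact: IH | apply: (lt_le_trans c0); rewrite lerDl; exact: sqr_ge0].
have z : nn (X x) = 0.
  apply: (@geom0 R c (t ^+ 2) (nn (X x)) ((2 * `|KB| + 2 * `|KC|) * nn x)) => //.
  - by rewrite exprn_gt0.
  - exact: nn_ge0.
  move=> k. apply: (le_trans (P2 k)). apply: (le_trans (KXb _)).
  rewrite -mulrA; apply: ler_wpM2l; first by have := normr_ge0 KB; have := normr_ge0 KC; lra.
  by rewrite mulrC; exact: P1.
by have /eqP := nn_eq0 z; rewrite subr_eq0 => /eqP.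
Qed.
End SqU.

Section Ser.
Variables (R : realType).
Local Notation Rc := (@complex.Re R).
Local Notation Ic := (@complex.Im R).
Implicit Types (a b z : R[i]).

Definition nr (z : R[i]) : R := Num.sqrt (Rc z ^+ 2 + Ic z ^+ 2).

Lemma normE z : `|z| = (nr z)%:C.
Proof. by rewrite normc_def. Qed.

Lemma nr_ge0 z : 0 <= nr z.
Proof. exact: sqrtr_ge0. Qed.

Lemma normC_lt z e : (`|z| < e%:C) = (nr z < e).
Proof. by rewrite normE ltcR. Qed.

Lemma nrD a b : nr (a + b) <= nr a + nr b.
Proof. by rewrite -lecR rmorphD /= -!normE ler_normD. Qed.

Lemma nrM a b : nr (a * b) = nr a * nr b.
Proof. by apply: complexI; rewrite rmorphM /= -!normE normrM. Qed.

Lemma nrN a : nr (- a) = nr a.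
Proof. by apply: complexI; rewrite -!normE normrN. Qed.

Lemma nr_eq0 a : nr a = 0 -> a = 0.
Proof. by move=> h; apply/eqP; rewrite -normr_eq0 normE h. Qed.

Lemma nr_small a e : 0 < e -> 2 * `|Rc a| <= e -> 2 * `|Ic a| <= e -> nr a < e.
Proof.
move=> e0 h1 h2. rewrite /nr.
have hX : Rc a ^+ 2 + Ic a ^+ 2 < e ^+ 2.
  rewrite -(real_normK (num_real (Rc a))) -(real_normK (num_real (Ic a))).
  have := normr_ge0 (Rc a). have := normr_ge0 (Ic a). nra.
by move: hX; rewrite -ltr_sqrt ?exprn_gt0 // sqrtr_sqr gtr0_norm.
Qed.

Lemma cs_uniq (u : nat -> R[i]) l1 l2 : cseries_to u l1 -> cseries_to u l2 -> l1 = l2.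
Proof.
move=> h1 h2. apply/eqP; rewrite -subr_eq0; apply/eqP; apply: nr_eq0.
apply/eqP; rewrite eq_le nr_ge0 andbT. apply/ler_addgt0Pr => e e0; rewrite add0r; apply: ltW.
have e2 : 0 < e / 2 by rewrite divr_gt0.
case: (h1 _ e2) => N1 H1. case: (h2 _ e2) => N2 H2.
have := H1 (maxn N1 N2) (leq_maxl _ _). have := H2 (maxn N1 N2) (leq_maxr _ _).
rewrite !normC_lt.
set s := \sum_(k < maxn N1 N2) u k.
have -> : l1 - l2 = (s - l2) + - (s - l1) by ring.
move=> a b. apply: le_lt_trans (nrD _ _) _. rewrite nrN. lra.
Qed.

Lemma cs_sum (u : nat -> R[i]) l : cseries_to u l -> cseries_sum u = l.
Proof.
move=> h. rewrite /cseries_sum.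
have := epsilon_spec (inhabits 0) (fun l => cseries_to u l) (ex_intro _ l h).
move=> h'. exact: (cs_uniq h' h).
Qed.

Lemma cs_equiv (u v : nat -> R[i]) :
  (forall e, 0 < e -> exists N, forall n, (N <= n)%N -> nr (\sum_(k < n) u k - \sum_(k < n) v k) < e) ->
  cseries_sum u = cseries_sum v.
Proof.
move=> hd. rewrite /cseries_sum. congr (epsilon _).
apply: functional_extensionality => l; apply: propositional_extensionality.
have side : forall u v : nat -> R[i], (forall e : R, 0 < e -> exists N, forall n, (N <= n)%N ->
      nr (\sum_(k < n) u k - \sum_(k < n) v k) < e) -> cseries_to u l -> cseries_to v l.
  move=> u' v' hd' hu e e0.
  have e2 : 0 < e / 2 by rewrite divr_gt0.
  case: (hd' _ e2) => N1 H1. case: (hu _ e2) => N2 H2.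
  exists (maxn N1 N2) => n hn.
  have := H1 n (leq_trans (leq_maxl _ _) hn). have := H2 n (leq_trans (leq_maxr _ _) hn).
  rewrite !normC_lt => a b.
  have -> : \sum_(k < n) v' k - l = (\sum_(k < n) u' k - l) + - (\sum_(k < n) u' k - \sum_(k < n) v' k).
    by ring.
  apply: le_lt_trans (nrD _ _) _. rewrite nrN. lra.
split; apply: side => //.
move=> e /hd [N HN]; exists N => n /HN. by rewrite -nrN opprB.
Qed.

End Ser.

Section Ser2.
Variables (R : realType) (H : chilbert R).
Local Notation ip := (@hs_inner R H).
Local Notation Rc := (@complex.Re R).
Local Notation Ic := (@complex.Im R).

Lemma Rc_conji (z : R[i]) : Rc (Num.conj 'i * z) = Ic z.
Proof. by case: z => a b; simpc. Qed.

Lemma nn_i (q : H) : nn ('i *: q) = nn q.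
Proof. by rewrite nnZ /= expr0n /= expr1n add0r mul1r. Qed.

Lemma ip_small (p q : H) e : 0 < e -> nn p + nn q < e -> nr (ip p q) < e.
Proof.
move=> e0 h. apply: nr_small => //.
  have := Re_ip_le p q. have := Re_ip_ge p q.
  move=> a b; apply: ltW.
  have : `|Rc (ip p q)| < e / 2 by rewrite ltr_norml; lra.
  lra.
have := Re_ip_le p ('i *: q). have := Re_ip_ge p ('i *: q).
rewrite ipZr Rc_conji nn_i.
move=> a b; apply: ltW.
have : `|Ic (ip p q)| < e / 2 by rewrite ltr_norml; lra.
lra.
Qed.

End Ser2.

Section Sums.
Variable R : realType.

Lemma sum3 (V : zmodType) (g : nat -> V) p n :
  (forall k, k != p -> k != p.+1 -> k != p.+2 -> g k = 0) -> (p.+3 <= n)%N ->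
  \sum_(k < n) g k = g p + g p.+1 + g p.+2.
Proof.
move=> hg hn. rewrite -(big_mkord xpredT) (@big_cat_nat _ _ _ p 0 n) /=; [|by []|by lia].
rewrite big1_seq ?add0r; last first.
  move=> k /andP[_]; rewrite mem_index_iota => /andP[_ hk].
  by apply: hg; apply/eqP; lia.
rewrite big_ltn; last by lia.
rewrite big_ltn; last by lia.
rewrite big_ltn; last by lia.
rewrite big1_seq ?addr0 ?addrA //.
move=> k /andP[_]; rewrite mem_index_iota => /andP[hk _].
by apply: hg; apply/eqP; lia.
Qed.

Lemma psum_mono (h : nat -> R) N N' : (forall k, 0 <= h k) -> (N <= N')%N ->
  \sum_(k < N) h k <= \sum_(k < N') h k.
Proof.
move=> h0 hN. rewrite -!(big_mkord xpredT) (@big_cat_nat _ _ _ N 0 N') /= ?lerDl //.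
by apply: sumr_ge0 => k _.
Qed.

Lemma tail0 (h : nat -> R) : (forall k, 0 <= h k) ->
  (exists M, forall N, \sum_(k < N) h k <= M) ->
  forall e, 0 < e -> exists N, forall k, (N <= k)%N -> h k < e.
Proof.
move=> h0 [M hM] e e0.
pose E := fun r : R => exists N, r = \sum_(k < N) h k.
have hs : has_sup E.
  split; first by exists 0; exists 0%N; rewrite big_ord0.
  by exists M => r [N ->].
case: (sup_adherent e0 hs) => r [N ->] hr.
exists N => k hk.
have ub := sup_upper_bound hs.
have h1 : \sum_(i < k.+1) h i <= sup E by apply: ub; exists k.+1.
have h2 : \sum_(i < N) h i <= \sum_(i < k) h i by apply: psum_mono.
rewrite big_ord_recr /= in h1. lra.
Qed.

End Sums.

Section Shift.
Variables (R : realType) (H : chilbert R).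
Local Notation ip := (@hs_inner R H).
Local Notation Rc := (@complex.Re R).
Local Notation Ic := (@complex.Im R).
Variable A : nat -> H -> H.
Hypotheses (hlA : forall n, hlinear (A n)) (hpA : forall n, hpositive (A n)).
Variable M2 : R.
Hypotheses (M20 : 0 <= M2) (hM2 : forall n x, nn (A n x) <= M2 * nn x).

Definition Tl (lam : R[i]) (x : nat -> H) : nat -> H :=
  fun n => wshift A x n + lam *: wshift A (wshift A x) n.
Definition Sl (lam : R[i]) (y : nat -> H) : nat -> H :=
  fun k => A k (y k.+1) + Num.conj lam *: A k (A k.+1 (y k.+2)).

Lemma l2_nn (x : nat -> H) : l2 x <-> exists M, forall N, \sum_(k < N) nn (x k) <= M.
Proof.
split=> [[M hM]|[M hM]]; exists M => N.
  by under eq_bigr do rewrite -hnorm_sq.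
by under eq_bigr do rewrite hnorm_sq.
Qed.

Lemma Sl_l2 lam y : l2 y -> l2 (Sl lam y).
Proof.
move=> /l2_nn [My hMy]; apply/l2_nn.
set L := Rc (Num.conj lam) ^+ 2 + Ic (Num.conj lam) ^+ 2.
have L0 : 0 <= L by rewrite /L addr_ge0 // sqr_ge0.
exists ((2 * M2 + 2 * L * (M2 * M2)) * My) => N.
have b1 : \sum_(k < N) nn (y k.+1) <= My.
  apply: le_trans (hMy N.+1). rewrite big_ord_recl /= lerDr. exact: nn_ge0.
have b2 : \sum_(k < N) nn (y k.+2) <= My.
  apply: le_trans (hMy N.+2). rewrite big_ord_recl big_ord_recl /= addrA lerDr.
  by rewrite addr_ge0 // nn_ge0.
have t k : nn (Sl lam y k) <= 2 * M2 * nn (y k.+1) + 2 * L * (M2 * M2) * nn (y k.+2).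
  rewrite /Sl. have := nnD_le (A k (y k.+1)) (Num.conj lam *: A k (A k.+1 (y k.+2))). rewrite nnZ -/L.
  have := hM2 k (y k.+1). have := hM2 k (A k.+1 (y k.+2)). have := hM2 k.+1 (y k.+2).
  have := nn_ge0 (A k.+1 (y k.+2)). have := nn_ge0 (y k.+2).
  move=> p1 p2 p3 p4 p5.
  have : M2 * nn (A k.+1 (y k.+2)) <= M2 * (M2 * nn (y k.+2)) by apply: ler_wpM2l.
  nra.
have St : \sum_(k < N) nn (Sl lam y k) <=
   \sum_(k < N) (2 * M2 * nn (y k.+1) + 2 * L * (M2 * M2) * nn (y k.+2)).
  by apply: ler_sum => k _; exact: t.
apply: (le_trans St).
rewrite big_split /= -!mulr_sumr.
have My0 : 0 <= My by apply: le_trans (hMy 0%N); rewrite big_ord0.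
have := ler_wpM2l (mulr_ge0 (mulr_ge0 (ler0n _ 2) L0) (mulr_ge0 M20 M20)) b2.
have := ler_wpM2l (mulr_ge0 (ler0n _ 2) M20) b1.
nra.
Qed.

Definition aa (x y : nat -> H) k := ip (A k (x k)) (y k.+1).
Definition bb (x y : nat -> H) k := ip (A k.+1 (A k (x k))) (y k.+2).

Lemma v_term lam (x y : nat -> H) k : ip (x k) (Sl lam y k) = aa x y k + lam * bb x y k.
Proof.
rewrite /Sl ipDr ipZr conjCK -(selfadj (hlA k) (hpA k)) -(selfadj (hlA k) (hpA k)).
by rewrite -(selfadj (hlA k.+1) (hpA k.+1)).
Qed.

Lemma U_sum lam (x y : nat -> H) N :
  \sum_(k < N.+2) ip (Tl lam x k) (y k) = \sum_(k < N.+1) aa x y k + lam * \sum_(k < N) bb x y k.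
Proof.
elim: N => [|N IH].
  rewrite big_ord_recr big_ord_recr big_ord0 /= !big_ord_recr !big_ord0 /=.
  rewrite /Tl /= (lin0 (hlA 0)) !scaler0 !addr0 !add0r ip0l add0r mulr0 addr0 /aa //.
rewrite big_ord_recr IH /= (big_ord_recr N.+1 (aa x y)) (big_ord_recr N (bb x y)) /=.
rewrite /Tl /= ipDl ipZl /aa /bb. ring.
Qed.

Lemma V_sum lam (x y : nat -> H) N :
  \sum_(k < N.+2) ip (x k) (Sl lam y k) =
  \sum_(k < N.+1) aa x y k + aa x y N.+1 + lam * (\sum_(k < N) bb x y k + bb x y N + bb x y N.+1).
Proof.
under eq_bigr do rewrite v_term.
rewrite big_split /= -mulr_sumr.
by rewrite [in LHS]big_ord_recr [X in _ + lam * X]big_ord_recr /= [X in _ + lam * (X + _)]big_ord_recr.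
Qed.

Lemma diffUV lam (x y : nat -> H) N :
  \sum_(k < N.+2) ip (Tl lam x k) (y k) - \sum_(k < N.+2) ip (x k) (Sl lam y k) =
  - (aa x y N.+1 + lam * (bb x y N + bb x y N.+1)).
Proof. rewrite U_sum V_sum. ring. Qed.


Lemma small_ip_A (p : H) (q : H) d : 0 < d -> nn p + nn q < d -> nr (ip p q) < d.
Proof. exact: ip_small. Qed.

Lemma adj lam : l2_adjoint (Sl lam) (Tl lam).
Proof.
split; first exact: Sl_l2.
move=> x y hx hy. rewrite /l2inner. apply: cs_equiv => e e0.
set d := e / (3 * (nr lam + 1)).
have nl0 := nr_ge0 lam.
have d0 : 0 < d by rewrite /d divr_gt0 // mulr_gt0 //; lra.
have ed : e = 3 * (nr lam + 1) * d by rewrite /d mulrC divfK //; apply: lt0r_neq0; nra.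
set K := 2 * (1 + M2 + M2 * M2).
have K0 : 0 < K by rewrite /K; nra.
set ep := d / K.
have ep0 : 0 < ep by rewrite /ep divr_gt0.
have dK : d = ep * K by rewrite /ep divfK //; apply: lt0r_neq0.
have [Nx HNx] := tail0 (fun k => nn_ge0 (x k)) (proj1 (l2_nn x) hx) ep0.
have [Ny HNy] := tail0 (fun k => nn_ge0 (y k)) (proj1 (l2_nn y) hy) ep0.
exists (maxn Nx Ny).+2 => n hn.
have -> : n = (n - 2).+2 by lia.
set m := (n - 2)%N.
have hm : (maxn Nx Ny <= m)%N by rewrite /m; lia.
rewrite diffUV nrN.
have sa : nr (aa x y m.+1) < d.
  apply: small_ip_A => //.
  have h1 := hM2 m.+1 (x m.+1). have h2 := HNx m.+1 ltac:(lia). have h3 := HNy m.+2 ltac:(lia).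
  have h4 := ler_wpM2l M20 (ltW h2).
  have h5 : 0 <= M2 * M2 * ep by apply: mulr_ge0; [exact: mulr_ge0 | exact: ltW].
  rewrite dK /K. nra.
have sb k : (m <= k)%N -> nr (bb x y k) < d.
  move=> hk. apply: small_ip_A => //.
  have p1 := hM2 k.+1 (A k (x k)). have p2 := hM2 k (x k).
  have p3 := HNx k ltac:(lia). have p4 := HNy k.+2 ltac:(lia).
  have p5 : M2 * nn (A k (x k)) <= M2 * (M2 * nn (x k)) by apply: ler_wpM2l.
  have p6 := ler_wpM2l (mulr_ge0 M20 M20) (ltW p3).
  have p7 : 0 <= M2 * ep by apply: mulr_ge0 => //; exact: ltW.
  rewrite dK /K. nra.
have b1 := sb m (leqnn m). have b2 := sb m.+1 (leqnSn m).
apply: le_lt_trans (nrD _ _) _. rewrite nrM.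
have := nrD (bb x y m) (bb x y m.+1).
have := nr_ge0 (bb x y m). have := nr_ge0 (bb x y m.+1). have := nr_ge0 (bb x y m + bb x y m.+1).
move=> *. rewrite ed. nra.
Qed.

End Shift.

Lemma poly46 (R : realType) (a b : R) : (forall s, 0 < s -> 0 <= s ^+ 4 * a + s ^+ 6 * b) -> 0 <= a.
Proof.
move=> h. rewrite leNgt; apply/negP => a0.
set t := Num.min 1 ((- a) / (2 * (`|b| + 1))).
have nb := normr_ge0 b. have lb := ler_norm b. have lb' := ler_normr b.
have d0 : 0 < (- a) / (2 * (`|b| + 1)) by rewrite divr_gt0 //; lra.
have t0 : 0 < t by rewrite /t lt_min ltr01 d0.
have t1 : t <= 1 by rewrite /t ge_min lexx.
have t2 : t <= (- a) / (2 * (`|b| + 1)) by rewrite /t ge_min lexx orbT.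
have t3 : t * (2 * (`|b| + 1)) <= - a by rewrite -ler_pdivlMr //; lra.
have := h t t0.
have e4 : t ^+ 6 * b = t ^+ 4 * (t ^+ 2 * b) by rewrite mulrA -exprD.
rewrite e4 -mulrDr pmulr_rge0 ?exprn_gt0 //.
have : t ^+ 2 * b <= t * `|b|.
  have : t ^+ 2 <= t by rewrite expr2 ger_pMr.
  move=> h2. have : t ^+ 2 * b <= t ^+ 2 * `|b| by rewrite ler_wpM2l ?exprn_ge0 // ltW.
  have : t ^+ 2 * `|b| <= t * `|b| by rewrite ler_wpM2r.
  lra.
nra.
Qed.

Section XF.
Variables (R : realType) (H : chilbert R).
Local Notation ip := (@hs_inner R H).
Definition xf p (a b c : H) (k : nat) : H :=
  if k == p then a else if k == p.+1 then b else if k == p.+2 then c else 0.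

Lemma xf0 p a b c : xf p a b c p = a.
Proof. by rewrite /xf eqxx. Qed.
Lemma xf1 p a b c : xf p a b c p.+1 = b.
Proof.
by rewrite /xf (_ : (p.+1 == p) = false) ?eqxx //; apply/negbTE/eqP; lia.
Qed.
Lemma xf2 p a b c : xf p a b c p.+2 = c.
Proof.
have e1 : (p.+2 == p) = false by apply/negbTE/eqP; lia.
have e2 : (p.+2 == p.+1) = false by apply/negbTE/eqP; lia.
by rewrite /xf e1 e2 eqxx.
Qed.
Lemma xfz p a b c k : k != p -> k != p.+1 -> k != p.+2 -> xf p a b c k = 0.
Proof. by move=> h1 h2 h3; rewrite /xf (negbTE h1) (negbTE h2) (negbTE h3). Qed.
Lemma xfm1 p a b c : xf p.+1 a b c p = 0.
Proof. by apply: xfz; apply/eqP; lia. Qed.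
Lemma xfm2 p a b c : xf p.+2 a b c p = 0.
Proof. by apply: xfz; apply/eqP; lia. Qed.
Lemma xfp3 p a b c : xf p a b c p.+3 = 0.
Proof. by apply: xfz; apply/eqP; lia. Qed.
Lemma xfp4 p a b c : xf p a b c p.+4 = 0.
Proof. by apply: xfz; apply/eqP; lia. Qed.

End XF.

Section Fin.
Variables (R : realType) (H : chilbert R).
Local Notation ip := (@hs_inner R H).
Local Notation Rc := (@complex.Re R).
Variable A : nat -> H -> H.
Hypotheses (hlA : forall n, hlinear (A n)) (hpA : forall n, hpositive (A n)).
Variable M2 : R.
Hypotheses (M20 : 0 <= M2) (hM2 : forall n x, nn (A n x) <= M2 * nn x).
Hypothesis hq : quad_hyponormal (wshift A).

Lemma xf_l2 p (a b c : H) : l2 (xf p a b c).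
Proof.
apply/l2_nn. exists (nn a + nn b + nn c) => N.
have hm := @psum_mono R (fun k => nn (xf p a b c k)) N (N + p.+3) (fun k => nn_ge0 _) (leq_addr p.+3 N).
apply: (le_trans hm).
rewrite (@sum3 _ (fun k => nn (xf p a b c k)) p) ?xf0 ?xf1 ?xf2 //; last by lia.
by move=> k h1 h2 h3; rewrite xfz // /nn ip0l.
Qed.

Definition fQ lam X n := Sl A lam (Tl A lam X) n - Tl A lam (Sl A lam X) n.

Lemma Qpos lam p (a b c : H) :
  0 <= ip (fQ lam (xf p a b c) p) a + ip (fQ lam (xf p a b c) p.+1) b + ip (fQ lam (xf p a b c) p.+2) c.
Proof.
set X := xf p a b c. set f := fQ lam X.
have h := @hq lam (Sl A lam) (@adj _ _ A hlA hpA M2 M20 hM2 lam) X (xf_l2 p a b c).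
rewrite /l2inner in h.
have e : cseries_sum (fun n => ip (f n) (X n)) = ip (f p) a + ip (f p.+1) b + ip (f p.+2) c.
  apply: cs_sum => e e0. exists p.+3 => n hn.
  rewrite (@sum3 _ (fun k => ip (f k) (X k)) p n) //.
    by rewrite /X xf0 xf1 xf2 subrr normr0 ltcR.
  by move=> k h1 h2 h3; rewrite /X xfz // ip0r.
by rewrite -e.
Qed.

End Fin.

Section Fwd.
Variables (R : realType) (H : chilbert R).
Local Notation ip := (@hs_inner R H).
Local Notation Rc := (@complex.Re R).
Variable A : nat -> H -> H.
Hypotheses (hlA : forall n, hlinear (A n)) (hpA : forall n, hpositive (A n)).

Lemma L0 k : A k 0 = 0. Proof. exact: lin0. Qed.
Lemma LD k x y : A k (x + y) = A k x + A k y. Proof. exact: linD. Qed.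
Lemma LZ k a x : A k (a *: x) = a *: A k x. Proof. exact: linZ. Qed.
Lemma LN k x : A k (- x) = - A k x. Proof. exact: linN. Qed.
Lemma LB k x y : A k (x - y) = A k x - A k y. Proof. exact: linB. Qed.
Lemma SA k x y : ip (A k x) y = ip x (A k y). Proof. exact: selfadj. Qed.

Variable n : nat.
Hypotheses (hn1 : A n = A n.+1) (hn2 : A n.+1 = A n.+2).

Lemma fwd_id (s : R) (u : H) :
  let B := A n.+2 in let C := A n.+3 in let D := A n.+4 in let E := A n.+4.+1 in
  let X := xf n.+2 u (- (s%:C *: B u)) ((s ^+ 2)%:C *: C (B u)) in
  let P := C (C (B u)) - B (B (B u)) in
  ip (fQ A (s%:C) X n.+2) u + ip (fQ A (s%:C) X n.+3) (- (s%:C *: B u))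
    + ip (fQ A (s%:C) X n.+4) ((s ^+ 2)%:C *: C (B u))
  = (s ^+ 4)%:C * (- ip P P) + (s ^+ 6)%:C *
      (ip (E (D (C (B u)))) (E (D (C (B u)))) - ip (B (C (C (B u)))) (B (C (C (B u))))).
Proof.
move=> B C D E X P.
rewrite /fQ /Sl /Tl /X /P /B /C /D /E /=.
rewrite ?xf0 ?xf1 ?xf2 ?xfm1 ?xfm2 ?xfp3 ?xfp4.
rewrite hn1 hn2.
do 6 rewrite ?LB ?LD ?LN ?LZ ?L0.
do 3 rewrite ?ipBl ?ipBr ?ipDl ?ipDr ?ipNl ?ipNr ?ipZl ?ipZr ?ip0l ?ip0r.
rewrite ?xf0 ?xf1 ?xf2 ?xfm1 ?xfm2 ?xfp3 ?xfp4.
do 6 rewrite ?LB ?LD ?LN ?LZ ?L0.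
do 3 rewrite ?ipBl ?ipBr ?ipDl ?ipDr ?ipNl ?ipNr ?ipZl ?ipZr ?ip0l ?ip0r.
rewrite ?SA ?conjR.
have e2 : (s ^+ 2)%:C = s%:C ^+ 2 :> R[i] by rewrite rmorphXn.
have e4 : (s ^+ 4)%:C = s%:C ^+ 4 :> R[i] by rewrite rmorphXn.
have e6 : (s ^+ 6)%:C = s%:C ^+ 6 :> R[i] by rewrite rmorphXn.
rewrite e2 e4 e6.
ring.
Qed.

End Fwd.

Section Bwd.
Variables (R : realType) (H : chilbert R).
Local Notation ip := (@hs_inner R H).
Local Notation Rc := (@complex.Re R).
Variable A : nat -> H -> H.
Hypotheses (hlA : forall n, hlinear (A n)) (hpA : forall n, hpositive (A n)).

Lemma bwd_id (p : nat) (hn1 : A p.+2 = A p.+3) (hn2 : A p.+3 = A p.+4) (s : R) (w y : H) :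
  let B := A p.+4 in let E := A p.+1 in let F := A p in
  let X := xf p.+1 ((s ^+ 2)%:C *: w) (- (s%:C *: B y)) y in
  let R0 := ip (E (B (B (E w)))) w -
     (match p with 0 => 0 | q.+1 => ip (F (A q (A q (F w)))) w end) in
  ip (fQ A (s%:C) X p.+1) ((s ^+ 2)%:C *: w) + ip (fQ A (s%:C) X p.+2) (- (s%:C *: B y))
    + ip (fQ A (s%:C) X p.+3) y
  = (s ^+ 4)%:C * (ip (E w - B (B (B y))) (E w - B (B (B y)))
                   - ip (F (w - E (B y))) (F (w - E (B y)))) + (s ^+ 6)%:C * R0.
Proof.
move=> B E F X R0.
have e2 : (s ^+ 2)%:C = s%:C ^+ 2 :> R[i] by rewrite rmorphXn.
have e4 : (s ^+ 4)%:C = s%:C ^+ 4 :> R[i] by rewrite rmorphXn.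
have e6 : (s ^+ 6)%:C = s%:C ^+ 6 :> R[i] by rewrite rmorphXn.
case: p hn1 hn2 @B @E @F @X @R0 => [|q] hn1 hn2 B E F X R0;
rewrite /fQ /Sl /Tl /X /R0 /B /E /F /=;
rewrite ?xf0 ?xf1 ?xf2 ?xfm1 ?xfm2 ?xfp3 ?xfp4;
rewrite hn1 hn2;
do 6 rewrite ?(LB hlA) ?(LD hlA) ?(LN hlA) ?(LZ hlA) ?(L0 hlA);
do 3 rewrite ?ipBl ?ipBr ?ipDl ?ipDr ?ipNl ?ipNr ?ipZl ?ipZr ?ip0l ?ip0r;
rewrite ?xf0 ?xf1 ?xf2 ?xfm1 ?xfm2 ?xfp3 ?xfp4;
do 6 rewrite ?(LB hlA) ?(LD hlA) ?(LN hlA) ?(LZ hlA) ?(L0 hlA);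
do 3 rewrite ?ipBl ?ipBr ?ipDl ?ipDr ?ipNl ?ipNr ?ipZl ?ipZr ?ip0l ?ip0r;
rewrite ?(SA hlA hpA) ?conjR e2 e4 e6.
  ring.
ring.
Qed.

End Bwd.

Section Main.
Variables (R : realType) (H : chilbert R).
Local Notation ip := (@hs_inner R H).
Local Notation Rc := (@complex.Re R).
Variable A : nat -> H -> H.
Hypotheses (hlA : forall n, hlinear (A n)) (hpA : forall n, hpositive (A n)).
Hypothesis hiA : forall n, hinvertible (A n).
Variable M2 : R.
Hypotheses (M20 : 0 <= M2) (hM2 : forall n x, nn (A n x) <= M2 * nn x).
Hypothesis hq : quad_hyponormal (wshift A).

Lemma bnd_sq (T : H -> H) (K : R) : (forall x, hnorm (T x) <= K * hnorm x) ->
  forall x, nn (T x) <= K ^+ 2 * nn x.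
Proof.
move=> h x. rewrite -!hnorm_sq.
have h0 : 0 <= hnorm (T x) by exact: sqrtr_ge0.
have h1 : 0 <= hnorm x by exact: sqrtr_ge0.
have := h x. move=> hx.
have : hnorm (T x) ^+ 2 <= (K * hnorm x) ^+ 2 by rewrite ler_pXn2r // ?nnegrE //; lra.
by rewrite exprMn.
Qed.

Lemma lowb n : exists c : R, 0 < c /\ forall x, c * nn x <= nn (A n x).
Proof.
case: (hiA n) => Bi [[_ [K hK]] [h1 h2]].
have hb := bnd_sq hK.
exists (1 / (K ^+ 2 + 1)); split.
  by rewrite divr_gt0 //; have := sqr_ge0 K; lra.
move=> x. have := hb (A n x). rewrite h2 => hx.
have p : 0 < K ^+ 2 + 1 by have := sqr_ge0 K; lra.
rewrite mulrC mulrA mulr1 ler_pdivrMr //.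
have := nn_ge0 (A n x). have := sqr_ge0 K. nra.
Qed.

Lemma fwd_step m : A m = A m.+1 -> A m.+1 = A m.+2 -> A m.+3 = A m.+2.
Proof.
move=> hn1 hn2.
have hP u : A m.+3 (A m.+3 (A m.+2 u)) = A m.+2 (A m.+2 (A m.+2 u)).
  set P := A m.+3 (A m.+3 (A m.+2 u)) - A m.+2 (A m.+2 (A m.+2 u)).
  have key : 0 <= - nn P.
    apply: poly46 => s s0.
    have h := Qpos hlA hpA M20 hM2 hq (s%:C) m.+2 u (- (s%:C *: A m.+2 u)) ((s ^+ 2)%:C *: A m.+3 (A m.+2 u)).
    rewrite (fwd_id hlA hpA hn1 hn2) in h.
    move: h; rewrite lecE => /andP[_].
    rewrite !raddfD /= !Rc_realM raddfN /= -/P.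
    exact.
  have : nn P = 0 by have := nn_ge0 P; lra.
  by move/nn_eq0/eqP; rewrite subr_eq0 => /eqP.
have [c [c0 hc]] := lowb m.+2.
apply: functional_extensionality => x.
symmetry. apply: (@sqrt_uniq R H (A m.+2) (A m.+3) (hlA _) (hlA _) (hpA _) (hpA _) M2 M2 c) => //.
move=> v. case: (hiA m.+2) => Bi [_ [h1 _]].
by rewrite -{1 2}(h1 v) hP h1.
Qed.

Lemma bwd_step p : A p.+2 = A p.+3 -> A p.+3 = A p.+4 -> A p.+1 = A p.+4.
Proof.
move=> hn1 hn2.
case: (hiA p.+1) => Ei [[hlEi _] [hE1 hE2]].
case: (hiA p) => Fi [[hlFi _] [hF1 hF2]].
have hP y : A p.+4 (A p.+4 (A p.+4 y)) = A p.+1 (A p.+1 (A p.+4 y)).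
  set w := Ei (A p.+4 (A p.+4 (A p.+4 y))).
  set Z := A p (w - A p.+1 (A p.+4 y)).
  have key : 0 <= nn (A p.+1 w - A p.+4 (A p.+4 (A p.+4 y))) - nn Z.
    apply: poly46 => s s0.
    have h := Qpos hlA hpA M20 hM2 hq (s%:C) p.+1 ((s ^+ 2)%:C *: w) (- (s%:C *: A p.+4 y)) y.
    rewrite (bwd_id hlA hpA hn1 hn2) in h.
    move: h; rewrite lecE => /andP[_].
    rewrite !raddfD /= !Rc_realM raddfB /= -/Z.
    exact.
  have ew : A p.+1 w = A p.+4 (A p.+4 (A p.+4 y)) by rewrite /w hE1.
  rewrite ew subrr /nn ip0l /= in key.
  have : nn Z = 0 by have := nn_ge0 Z; rewrite /nn in key *; lra.
  move/nn_eq0. rewrite /Z => hz.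
  have : w - A p.+1 (A p.+4 y) = 0 by rewrite -(hF2 (w - _)) hz (lin0 hlFi).
  move/eqP; rewrite subr_eq0 => /eqP hw.
  by rewrite -ew hw.
have [c [c0 hc]] := lowb p.+4.
apply: functional_extensionality => x.
symmetry. apply: (@sqrt_uniq R H (A p.+4) (A p.+1) (hlA _) (hlA _) (hpA _) (hpA _) M2 M2 c) => //.
move=> v. case: (hiA p.+4) => Bi [_ [h1 _]].
by rewrite -{1 2}(h1 v) hP h1.
Qed.

End Main.

Local Close Scope complex_scope.
Unset Implicit Arguments.

Theorem mainTheorem6 (R : realType) (H : chilbert R) (A : nat -> H -> H)
  (hA : forall n, bounded_op (A n) /\ hpositive (A n) /\ hinvertible (A n))
  (hsup : exists M : R, forall (n : nat) (x : H), hnorm (A n x) <= M * hnorm x)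
  (hq : quad_hyponormal (wshift A))
  (n : nat) (hn : A n = A n.+1 /\ A n.+1 = A n.+2) :
  forall k : nat, (1 <= k)%N -> A k = A n.
Proof.
have hlA : forall n, hlinear (A n) by move=> m; exact: (hA m).1.1.
have hpA : forall n, hpositive (A n) by move=> m; exact: (hA m).2.1.
have hiA : forall n, hinvertible (A n) by move=> m; exact: (hA m).2.2.
case: hsup => M hM.
have hM2 : forall m x, nn (A m x) <= M ^+ 2 * nn x by move=> m; exact: bnd_sq (hM m).
have M20 : 0 <= M ^+ 2 by exact: sqr_ge0.
have fwd := fwd_step hlA hpA hiA M20 hM2 hq.
have bwd := bwd_step hlA hpA hiA M20 hM2 hq.
case: hn => hn1 hn2.
have F j : [/\ A (n + j)%N = A n, A (n + j)%N.+1 = A n & A (n + j)%N.+2 = A n].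
  elim: j => [|j [e0 e1 e2]]; first by rewrite addn0 -hn2 -hn1; split.
  rewrite addnS; split => //.
  by rewrite (fwd (n + j)%N) // ?e0 ?e1 ?e2.
have Bk d : forall k, (1 <= k)%N -> (k + d = n)%N ->
    [/\ A k = A n, A k.+1 = A n & A k.+2 = A n].
  elim: d => [|d IH] k hk hkd.
    by rewrite addn0 in hkd; subst k; have := F 0%N; rewrite addn0.
  have hkd' : (k.+1 + d = n)%N by rewrite addSnnS.
  have [e1 e2 e3] := IH k.+1 (leq_trans hk (leqnSn k)) hkd'.
  split => //.
  case: k hk hkd hkd' {IH} e1 e2 e3 => [//|p] _ _ _ e1 e2 e3.
  by rewrite (bwd p) ?e1 ?e2 ?e3.
move=> k hk.
case: (leqP n k) => hnk.
  by have [] := F (k - n)%N; rewrite subnKC.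
have [] // := Bk (n - k)%N k hk; lia.
Qed.
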